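(* Let $u$ be the field with $u(x+\tfrac12,t+\tfrac12)=(-1)^{(x-1)(t-1)}$ for all $(x,t)\in\mathbb{Z}^2$. For each $(x,t)\in\mathbb{Z}^2$ with $t\ge 1$ and either $(x,t)\equiv(2,1)\pmod 4$ or $(x,t)\equiv(0,3)\pmod 4$ (componentwise), the following hold: 1. $\sqrt2\, a_1(x+1,t,u)=a_1(x,t-1,u)=\sqrt2\, a_1(x-1,t,u)=a_1(x,t+1,u)=\sqrt2\, a_2(x+1,t,u)=\sqrt2\, a_2(x-1,t,u)-2a_2(x,t+1,u)$; 2. $a_2(x,t-1,u)=0$.
   Context: A checker path is a finite sequence of integer points $s_0,s_1,\dots,s_t$ in the plane such that each vector $s_{k+1}-s_k$ equals $(1,1)$ or $(-1,1)$. A turn is a point $s_k$ with $0<k<t$ such that the vectors $s_{k+1}-s_k$ and $s_{k-1}-s_k$ are orthogonal; $\mathrm{turns}(s)$ is the number of turns. An edge is a segment joining two diagonally adjacent integer points (differing by $(\pm1,1)$) whose coordinate sums are even; every step $s_ks_{k+1}$ of a checker path starting at $(0,0)$ is an edge. A field is a map $u$ from edges to $\{-1,1\}$; for half-integers $x,t$ (i.e. $x-\tfrac12,t-\tfrac12\in\mathbb{Z}$), $u(x,t)$ denotes the value of $u$ on the edge with midpoint $(x,t)$. For integers $x$ and $t\ge 0$ define $$a(x,t,u):=2^{(1-t)/2}\, i\sum_s(-i)^{\mathrm{turns}(s)}u(s_0s_1)u(s_1s_2)\cdots u(s_{t-1}s_t),$$ the sum over all checker paths $s=(s_0,\dots,s_t)$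 with $s_0=(0,0)$, $s_1=(1,1)$, $s_t=(x,t)$ (an empty sum is $0$; in particular $a(x,0,u)=0$). Let $a_1(x,t,u)$ and $a_2(x,t,u)$ be the real and imaginary parts of $a(x,t,u)$. *)

(* Defs.v *)
From HB Require Import structures.
From mathcomp Require Import all_boot all_order all_algebra all_field.
Set Implicit Arguments. Unset Strict Implicit. Unset Printing Implicit Defensive.
Import Order.TTheory GRing.Theory Num.Theory.
Local Open Scope ring_scope.

Definition point := (int * int)%type.

(* A field: u m n is the value (in {-1,1}) of u on the edge whose midpoint is
   (m + 1/2, n + 1/2).  Each such half-integer point is the midpoint of exactly
   one edge (the diagonal joining two points with even coordinate sums). *)
Definition field := int -> int -> algC.

Definition is_field (u : field) : Prop := forall m n, u m n = 1 \/ u m n = -1.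

(* value of u on the edge joining p and q (diagonally adjacent): its midpoint is
   (min p.1 q.1 + 1/2, min p.2 q.2 + 1/2). *)
Definition edge_val (u : field) (p q : point) : algC :=
  u (Num.min p.1 q.1) (Num.min p.2 q.2).

(* A checker path with t steps starting at (0,0) is encoded by its step
   directions d : 'I_t -> bool, true = (1,1), false = (-1,1). *)
Definition stepx (b : bool) : int := if b then 1 else -1.

Definition pt (t : nat) (d : {ffun 'I_t -> bool}) (k : nat) : point :=
  ((\sum_(i < t | (i < k)%N) stepx (d i))%R, (k%:Z)%R).

Definition vsub (p q : point) : point := (p.1 - q.1, p.2 - q.2).
Definition dot (p q : point) : int := p.1 * q.1 + p.2 * q.2.

Definition turns (t : nat) (d : {ffun 'I_t -> bool}) : nat :=
  #|[set k : 'I_t | (0 < val k)%N &&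
      (dot (vsub (pt d (val k).+1) (pt d (val k)))
           (vsub (pt d (val k).-1) (pt d (val k))) == 0)]|.

Definition a (x : int) (t : nat) (u : field) : algC :=
  (sqrtC 2) ^ (1 - t%:Z) * 'i *
  \sum_(d : {ffun 'I_t -> bool} |
          [&& (0 < t)%N, pt d 1 == (1, 1) & pt d t == (x, t%:Z)])
     (- 'i) ^+ turns d * \prod_(k < t) edge_val u (pt d k) (pt d k.+1).

Definition a1 (x : int) (t : nat) (u : field) : algC := 'Re (a x t u).
Definition a2 (x : int) (t : nat) (u : field) : algC := 'Im (a x t u).

Definition u0 : field := fun x t => (-1) ^ ((x - 1) * (t - 1)).

(* Main.v *)
Require Import Defs.
From HB Require Import structures.
From mathcomp Require Import all_boot all_order all_algebra all_field.
From mathcomp Require Import zify ring lra.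
Import Order.TTheory GRing.Theory Num.Theory.
Set Implicit Arguments. Unset Strict Implicit. Unset Printing Implicit Defensive.
Local Open Scope ring_scope.



Definition dn t (d : {ffun 'I_t -> bool}) (n : nat) : bool :=
  if (insub n : option 'I_t) is Some j then d j else false.

Lemma dnE t (d : {ffun 'I_t -> bool}) (i : 'I_t) : dn d i = d i.
Proof. by rewrite /dn valK. Qed.

Lemma dn_out t (d : {ffun 'I_t -> bool}) n : (t <= n)%N -> dn d n = false.
Proof. by move=> h; rewrite /dn insubN // -leqNgt. Qed.

Definition X (f : nat -> bool) n : int := \sum_(i < n) stepx (f i).

Lemma XS f n : X f n.+1 = X f n + stepx (f n).
Proof. by rewrite /X big_ord_recr. Qed.

Lemma pt_E t (d : {ffun 'I_t -> bool}) n : (n <= t)%N -> pt d n = (X (dn d) n, n%:Z).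
Proof.
move=> h; rewrite /pt /X (big_ord_widen t (fun i => stepx (dn d i))) //.
by congr pair; apply: eq_bigr => i _; rewrite dnE.
Qed.

Definition TN (f : nat -> bool) t : nat := \sum_(k < t) ((0 < k)%N && (f k != f k.-1)).

Lemma edgeE (y : int) (k : nat) b :
  edge_val u0 (y, k%:Z) (y + stepx b, k.+1%:Z) = u0 (if b then y else y - 1) k.
Proof.
rewrite /edge_val /=.
rewrite (@min_l _ _ k%:Z k.+1%:Z); last by lia.
case: b => /=.
  by rewrite min_l //; lia.
by rewrite min_r //; lia.
Qed.
Lemma u0real m n : u0 m n \is Num.real.
Proof. rewrite /u0. apply: rpredXz. by rewrite rpredN rpred1. Qed.
Lemma m1even (z : int) : (-1 : algC) ^ (2 * z) = 1.
Proof.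
rewrite -exprz_exp.
have -> : (-1 : algC) ^ 2 = 1 by rewrite -exprnP expr2 mulrNN mulr1.
by rewrite exp1rz.
Qed.
Lemma m1odd (z : int) : (-1 : algC) ^ (2 * z + 1) = -1.
Proof. rewrite expfzDr ?m1even ?mul1r //. by rewrite oppr_eq0 oner_eq0. Qed.
Lemma u0ee (m n : int) : u0 (2 * m) (2 * n) = -1.
Proof. by rewrite /u0 (_ : (2 * m - 1) * (2 * n - 1) = 2 * (2 * m * n - m - n) + 1) ?m1odd //; ring. Qed.
Lemma u0o1 (m n : int) : u0 (2 * m + 1) n = 1.
Proof. by rewrite /u0 (_ : (2 * m + 1 - 1) * (n - 1) = 2 * (m * (n - 1))) ?m1even //; ring. Qed.
Lemma u0o2 (m n : int) : u0 m (2 * n + 1) = 1.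
Proof. by rewrite /u0 (_ : (m - 1) * (2 * n + 1 - 1) = 2 * (n * (m - 1))) ?m1even //; ring. Qed.

Lemma turnsE t (d : {ffun 'I_t -> bool}) : turns d = TN (dn d) t.
Proof.
rewrite /turns -sum1_card /TN big_mkcond /=; apply: eq_bigr => k _.
rewrite inE; case: k => [[|k] hk] //=.
rewrite !pt_E ?(ltnW hk) ?(ltnW (ltnW hk)) //.
rewrite /vsub /dot /= !XS.
by case: (dn d k.+1); case: (dn d k) => /=; case: ifP => /eqP; lia.
Qed.

Definition E (f : nat -> bool) (k : nat) : algC := u0 (if f k then X f k else X f k - 1) k.
Definition PN f t := \prod_(k < t) E f k.
Definition W f t := (- 'i) ^+ TN f t * PN f t.

Lemma prodE t (d : {ffun 'I_t -> bool}) :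
  \prod_(k < t) edge_val u0 (pt d k) (pt d k.+1) = PN (dn d) t.
Proof.
apply: eq_bigr => k _.
by rewrite (pt_E d (ltnW (ltn_ord k))) (pt_E d (ltn_ord k)) XS edgeE.
Qed.

Lemma X_eq f g n : (forall i, (i < n)%N -> f i = g i) -> X f n = X g n.
Proof. by move=> h; apply: eq_bigr => i _; rewrite h. Qed.
Lemma TN_eq f g t : (forall i, (i < t)%N -> f i = g i) -> TN f t = TN g t.
Proof.
move=> h; apply: eq_bigr => [[k hk]] _ /=.
by rewrite (h k hk) (h k.-1) //; exact: leq_ltn_trans (leq_pred k) hk.
Qed.
Lemma PN_eq f g t : (forall i, (i < t)%N -> f i = g i) -> PN f t = PN g t.
Proof.
move=> h; apply: eq_bigr => [[k hk]] _; rewrite /E /= (h k hk) (@X_eq f g k) //.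
move=> i hi; apply: h; exact: ltn_trans hi hk.
Qed.

Definition ext t (d : {ffun 'I_t -> bool}) (b : bool) : {ffun 'I_t.+1 -> bool} :=
  [ffun i : 'I_t.+1 => if (i < t)%N then dn d i else b].
Lemma dn_ext t (d : {ffun 'I_t -> bool}) b n : (n < t.+1)%N ->
  dn (ext d b) n = if (n < t)%N then dn d n else b.
Proof. by move=> h; rewrite -[n]/(nat_of_ord (Ordinal h)) dnE ffunE. Qed.
Definition restr t (e : {ffun 'I_t.+1 -> bool}) : {ffun 'I_t -> bool} :=
  [ffun j => e (widen_ord (leqnSn t) j)].

Lemma sum_ext t (F : {ffun 'I_t.+1 -> bool} -> algC) :
  \sum_e F e = \sum_(d : {ffun 'I_t -> bool}) \sum_(b : bool) F (ext d b).
Proof.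
rewrite pair_big /=.
rewrite (reindex (fun p : {ffun 'I_t -> bool} * bool => ext p.1 p.2)) //.
apply: onW_bij; exists (fun e => (restr e, e ord_max)).
- move=> [d b] /=; congr pair.
  + by apply/ffunP => j; rewrite !ffunE /= ltn_ord dnE.
  + by rewrite ffunE /= ltnn.
- move=> e; apply/ffunP => i; rewrite ffunE.
  case: ifP => hi.
  + rewrite -[nat_of_ord i]/(nat_of_ord (Ordinal hi)) dnE ffunE; congr (e _); exact: val_inj.
  + congr (e _); apply: val_inj => /=; have := ltn_ord i; move: hi; lia.
Qed.



Lemma dn_ext_lt t (d : {ffun 'I_t -> bool}) c n : (n < t)%N -> dn (ext d c) n = dn d n.
Proof. by move=> h; rewrite dn_ext ?h // ltnW. Qed.
Lemma dn_ext_t t (d : {ffun 'I_t -> bool}) c : dn (ext d c) t = c.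
Proof. by rewrite dn_ext // ltnn. Qed.
Lemma X_ext t (d : {ffun 'I_t -> bool}) c n : (n <= t)%N -> X (dn (ext d c)) n = X (dn d) n.
Proof. move=> h; apply: X_eq => i hi; apply: dn_ext_lt; exact: leq_trans hi h. Qed.
Lemma X_ext_S t (d : {ffun 'I_t -> bool}) c : X (dn (ext d c)) t.+1 = X (dn d) t + stepx c.
Proof. by rewrite XS X_ext // dn_ext_t. Qed.
Lemma TN_ext t (d : {ffun 'I_t -> bool}) c : (0 < t)%N ->
  TN (dn (ext d c)) t.+1 = (TN (dn d) t + (c != dn d t.-1))%N.
Proof.
move=> h; rewrite /TN big_ord_recr /= h dn_ext_t dn_ext_lt; last by rewrite ltn_predL.
congr addn; apply: (TN_eq (t:=t)) => i hi; exact: dn_ext_lt.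
Qed.
Lemma PN_ext t (d : {ffun 'I_t -> bool}) c :
  PN (dn (ext d c)) t.+1 = PN (dn d) t * u0 (if c then X (dn d) t else X (dn d) t - 1) t.
Proof.
rewrite /PN big_ord_recr /=; congr (_ * _).
  apply: (PN_eq (t:=t)) => i hi; exact: dn_ext_lt.
by rewrite /E dn_ext_t X_ext.
Qed.
Lemma W_ext t (d : {ffun 'I_t -> bool}) c : (0 < t)%N ->
  W (dn (ext d c)) t.+1 = W (dn d) t * (- 'i) ^+ (c != dn d t.-1)
     * u0 (if c then X (dn d) t else X (dn d) t - 1) t.
Proof. by move=> h; rewrite /W TN_ext // PN_ext exprD; ring. Qed.

Definition cond t (d : {ffun 'I_t -> bool}) (x : int) :=
  [&& (0 < t)%N, X (dn d) 1 == 1 & X (dn d) t == x].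
Lemma cond_ext t (d : {ffun 'I_t -> bool}) c x : (0 < t)%N ->
  cond (ext d c) x = [&& X (dn d) 1 == 1 & X (dn d) t + stepx c == x].
Proof. by move=> h; rewrite /cond X_ext_S X_ext. Qed.

Definition r : algC := sqrtC 2.
Lemma a_E x t : a x t u0 = r ^ (1 - t%:Z) * 'i * \sum_(d : {ffun 'I_t -> bool} | cond d x) W (dn d) t.
Proof.
rewrite /a; congr (_ * _); apply: eq_big => d.
- rewrite /cond; case: t d => [|t] d //=.
  by rewrite !pt_E // !xpair_eqE !eqxx !andbT.
- by move=> _; rewrite turnsE prodE.
Qed.

Definition Pz x t b := \sum_(d : {ffun 'I_t -> bool} | cond d x && (dn d t.-1 == b)) W (dn d) t.
Lemma sum_split x t : \sum_(d : {ffun 'I_t -> bool} | cond d x) W (dn d) t = Pz x t false + Pz x t true.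
Proof.
rewrite (bigID (fun d => dn d t.-1)) addrC /Pz; congr (_ + _); apply: eq_bigl => d;
 by case: (dn d t.-1); rewrite ?andbT ?andbF.
Qed.

Lemma Pz_rec x t b : (0 < t)%N ->
  Pz x t.+1 b = u0 (if b then x - 1 else x) t *
     (Pz (x - stepx b) t b + (- 'i) * Pz (x - stepx b) t (~~ b)).
Proof.
move=> ht.
rewrite /Pz big_mkcond sum_ext /=.
rewrite mulrDr !mulr_sumr.
rewrite [X in _ = X + _]big_mkcond [X in _ = _ + X]big_mkcond -big_split /=.
apply: eq_bigr => d _; rewrite big_bool /= !cond_ext // !dn_ext_t !W_ext //.
rewrite /cond ht /=.
have h1 : (X (dn d) t + 1 == x) = (X (dn d) t == x - 1).
  by rewrite [RHS]eq_sym subr_eq eq_sym.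
have h2 : (X (dn d) t - 1 == x) = (X (dn d) t == x + 1).
  by rewrite subr_eq.
rewrite h1 h2.
case: b => /=; rewrite ?opprK; case: (dn d t.-1); case: (X (dn d) 1 == 1) => //=;
  rewrite ?andbT ?andbF /=; case: eqP => [->|_] //=;
  rewrite ?mulr0 ?addr0 ?add0r ?expr0 ?expr1 ?mulr1 /= ?addrK; try ring.
Qed.



Lemma Pz1 x b : Pz x 1 b = if b && (x == 1) then -1 else 0.
Proof.
rewrite /Pz big_mkcond sum_ext /=.
rewrite (big_pred1 [ffun i : 'I_0 => false]); last first.
  by move=> d; symmetry; apply/eqP/ffunP => -[].
rewrite big_bool /= !dn_ext_t /cond /= !X_ext_S /W /TN big_ord1 /= /PN big_ord1 /E dn_ext_t.
rewrite /X !big_ord0 /= !add0r.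
have h00 : u0 0 0 = -1 by have := u0ee 0 0; rewrite mulr0.
case: b; case: (x =P 1) => [->|hx] //=; rewrite ?h00 ?expr0 ?mul1r ?addr0 //=;
  case: eqP => // e; by case: hx.
Qed.

Fixpoint ab (t : nat) (x : int) {struct t} : algC * algC :=
  match t with
  | 0 => (0, 0)
  | t'.+1 => if t' is 0 then (0, if x == 1 then -1 else 0)
             else (u0 x t' * ((ab t' (x + 1)).1 + (ab t' (x + 1)).2),
                   u0 (x - 1) t' * ((ab t' (x - 1)).2 - (ab t' (x - 1)).1))
  end.

Lemma ab_S t x : (0 < t)%N -> ab t.+1 x =
  (u0 x t * ((ab t (x + 1)).1 + (ab t (x + 1)).2),
   u0 (x - 1) t * ((ab t (x - 1)).2 - (ab t (x - 1)).1)).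
Proof. by case: t. Qed.

Lemma Pz_ab t : (0 < t)%N -> forall x,
  Pz x t false = - 'i * (ab t x).1 /\ Pz x t true = (ab t x).2.
Proof.
elim: t => [//|t IH] _ x.
case: (posnP t) => [->|ht].
  by rewrite !Pz1 /= mulr0; split => //; case: (x == 1).
rewrite !Pz_rec // ab_S //= opprK.
have [h1 h2] := IH ht (x + 1); have [h3 h4] := IH ht (x - 1).
rewrite h1 h2 h3 h4; split.
  by ring.
by rewrite mulrA mulrNN mulCii; ring.
Qed.

Lemma ab_real t x : (ab t x).1 \is Num.real /\ (ab t x).2 \is Num.real.
Proof.
elim: t x => [|t IH] x; first by rewrite /= rpred0.
case: (posnP t) => [->|ht].
  by rewrite /= rpred0; case: (x == 1); rewrite ?rpredN ?rpred1 ?rpred0.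
rewrite ab_S //=; have [h1 h2] := IH (x + 1); have [h3 h4] := IH (x - 1).
split; apply: realM; try exact: u0real.
  exact: realD.
exact: realB.
Qed.

Lemma rz_real z : r ^ z \is Num.real.
Proof. by apply: ger0_real; apply: exprz_ge0; rewrite sqrtC_ge0 ler0n. Qed.

Lemma a_ab x t : (0 < t)%N -> a x t u0 = r ^ (1 - t%:Z) * ((ab t x).1 + 'i * (ab t x).2).
Proof.
move=> ht; rewrite a_E sum_split; have [h1 h2] := Pz_ab ht x.
rewrite h1 h2 -mulrA; congr (_ * _).
rewrite mulrDr mulrA mulrN mulCii opprK mul1r; ring.
Qed.

Lemma a1_ab x t : (0 < t)%N -> a1 x t u0 = r ^ (1 - t%:Z) * (ab t x).1.
Proof.
move=> ht; have [h1 h2] := ab_real t x.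
by rewrite /a1 a_ab // (ReMl (rz_real _)) Re_rect.
Qed.
Lemma a2_ab x t : (0 < t)%N -> a2 x t u0 = r ^ (1 - t%:Z) * (ab t x).2.
Proof.
move=> ht; have [h1 h2] := ab_real t x.
by rewrite /a2 a_ab // (ImMl (rz_real _)) Im_rect.
Qed.



Lemma a0 x : a x 0 u0 = 0.
Proof. by rewrite /a big_pred0 // mulr0. Qed.
Lemma a10 x : a1 x 0 u0 = 0.
Proof. by rewrite /a1 a0; have := @Re_rect algC 0 0 (rpred0 _) (rpred0 _); rewrite mulr0 addr0. Qed.
Lemma a20 x : a2 x 0 u0 = 0.
Proof. by rewrite /a2 a0; have := @Im_rect algC 0 0 (rpred0 _) (rpred0 _); rewrite mulr0 addr0. Qed.

Lemma test (x : int) (t : nat) : (x %% 4 = 2)%Z -> (t %% 4 = 1)%N -> (1 < t)%N ->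
  exists n : nat, exists j : int, t = (2 * n + 3)%N /\ x = 4 * j + 2 * n%:Z.
Proof.
move=> hx ht h1.
exists ((t - 3) %/ 2)%N; exists ((x - 2 * ((t - 3) %/ 2)%N%:Z) %/ 4)%Z.
split; lia.
Qed.

Lemma u0_vals (m q : int) (s : nat) : s%:Z = 2 * q ->
  ([/\ u0 (2 * m) s.+1 = 1, u0 (2 * m - 1) s.+1 = 1 & u0 (2 * m + 1) s = 1] /\
   [/\ u0 (2 * m) s = -1, u0 (2 * m - 1) s = 1 & u0 (2 * m - 1 - 1) s = -1]).
Proof.
move=> hs.
have hs1 : (s.+1)%:Z = 2 * q + 1 by rewrite -hs; lia.
rewrite hs1 hs !u0o2 u0o1 u0ee; split; split => //.
  by rewrite (_ : 2 * m - 1 = 2 * (m - 1) + 1) ?u0o1 //; ring.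
by rewrite (_ : 2 * m - 1 - 1 = 2 * (m - 1)) ?u0ee //; ring.
Qed.

Lemma two_step (x m q : int) (s : nat) : x = 2 * m -> s%:Z = 2 * q -> (0 < s)%N ->
  (ab s.+2 x).1 = (ab s (x + 2)).1 + (ab s (x + 2)).2 + (ab s x).1 - (ab s x).2 /\
  (ab s.+2 x).2 = (ab s (x - 2)).1 - (ab s (x - 2)).2 - (ab s x).1 - (ab s x).2.
Proof.
move=> -> hs hpos.
have [[e1 e2 e3] [e4 e5 e6]] := u0_vals m hs.
rewrite !ab_S //= e1 e2 addrK subrK e3 e4 e5 e6.
rewrite (_ : 2 * m + 1 + 1 = 2 * m + 2); last by ring.
rewrite (_ : 2 * m - 1 - 1 = 2 * m - 2); last by ring.
by split; ring.
Qed.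

Lemma inv (n : nat) (j : int) :
  (ab (2 * n + 2) (4 * j + 2 * n%:Z)).2 = 0 /\
  (ab (2 * n + 2) (4 * j + 2 * n%:Z)).1 =
    (ab (2 * n + 2) (4 * j + 2 * n%:Z + 2)).1 + (ab (2 * n + 2) (4 * j + 2 * n%:Z + 2)).2.
Proof.
elim: n j => [|n IH] j.
  have u1 : forall m, u0 m 1 = 1 by move=> m; have := u0o2 m 0.
  rewrite !(ab_S (t:=1)) //= !u1 !mul1r !add0r !subr0.
  set y := 4 * j.
  have h1 : (y - 1 == 1) = false by apply/eqP; rewrite /y; lia.
  have h2 : (y + 2 + 1 == 1) = false by apply/eqP; rewrite /y; lia.
  have h3 : (y + 2 - 1 == 1) = (y + 1 == 1).
    by apply/idP/idP => /eqP h; apply/eqP; rewrite /y in h *; lia.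
  by rewrite h1 h2 h3 add0r; split.
have E1 : 4 * j + 2 * (n.+1)%:Z = 4 * j + 2 * n%:Z + 2 by lia.
have E2 : 4 * j + 2 * n%:Z + 2 + 2 = 4 * (j + 1) + 2 * n%:Z by ring.
have E3 : 4 * (j + 1) + 2 * n%:Z - 2 = 4 * j + 2 * n%:Z + 2 by ring.
have En : (2 * n.+1 + 2 = (2 * n + 2).+2)%N by lia.
rewrite E1 E2 En.
have hs : (2 * n + 2)%N%:Z = 2 * (n%:Z + 1) by lia.
have [A1 B1] := @two_step (4 * j + 2 * n%:Z + 2) (2 * j + n%:Z + 1) (n%:Z + 1) (2 * n + 2)%N ltac:(ring) hs ltac:(lia).
have [A2 B2] := @two_step (4 * (j + 1) + 2 * n%:Z) (2 * j + n%:Z + 2) (n%:Z + 1) (2 * n + 2)%N ltac:(ring) hs ltac:(lia).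
rewrite E2 addrK in A1 B1. rewrite E3 in A2 B2.
have [I1 I2] := IH j. have [I3 I4] := IH (j + 1).
rewrite A1 B1 A2 B2 I1 I3 I2 I4; split; ring.
Qed.

Lemma rnz : r != 0.
Proof. by rewrite /r sqrtC_eq0 pnatr_eq0. Qed.
Lemma r2 : (2 : algC) = r * r.
Proof. by rewrite -expr2 sqrtCK. Qed.

Lemma main (x m q : int) (s : nat) : x = 2 * m -> s%:Z = 2 * q -> (0 < s)%N ->
  (ab s x).2 = 0 -> (ab s x).1 = (ab s (x + 2)).1 + (ab s (x + 2)).2 ->
  (sqrtC 2 * a1 (x + 1) s.+1 u0 = a1 x s.+1.-1 u0 /\
   a1 x s.+1.-1 u0 = sqrtC 2 * a1 (x - 1) s.+1 u0 /\
   sqrtC 2 * a1 (x - 1) s.+1 u0 = a1 x s.+2 u0 /\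
   a1 x s.+2 u0 = sqrtC 2 * a2 (x + 1) s.+1 u0 /\
   sqrtC 2 * a2 (x + 1) s.+1 u0 = sqrtC 2 * a2 (x - 1) s.+1 u0 - 2 * a2 x s.+2 u0) /\
  a2 x s.+1.-1 u0 = 0.
Proof.
move=> hx hs hs0 H1 H2 /=.
rewrite !a1_ab // !a2_ab //.
set c := r ^ (1 - (s.+1)%:Z).
have es : r ^ (1 - s%:Z) = c * r.
  by rewrite /c (_ : 1 - s%:Z = (1 - (s.+1)%:Z) + 1) ?expfzDr ?rnz ?expr1z //; lia.
have et : r ^ (1 - (s.+2)%:Z) = c * r^-1.
  by rewrite /c -exprN1 (_ : 1 - (s.+2)%:Z = (1 - (s.+1)%:Z) + (-1)) ?expfzDr ?rnz //; lia.
rewrite es et -[sqrtC 2]/r.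
rewrite !(ab_S (t:=s.+1)) // !(ab_S (t:=s)) //=.
subst x.
have [[e1 e2 e3] [e4 e5 e6]] := u0_vals m hs.
rewrite (_ : 2 * m + 1 + 1 = 2 * m + 2); last by ring.
rewrite (_ : 2 * m - 1 + 1 = 2 * m); last by ring.
rewrite (_ : 2 * m + 1 - 1 = 2 * m); last by ring.
rewrite e1 e2 e3 e4 e5 e6 -H2 H1.
have hinv : r^-1 = r / 2.
  apply: (mulfI rnz); rewrite mulfV ?rnz // mulrA -r2 divff //.
  by rewrite pnatr_eq0.
rewrite hinv.
by split; first (repeat split); field.
Qed.

Lemma case1 (x : int) : (x %% 4 = 2)%Z ->
  (sqrtC 2 * a1 (x + 1) 1 u0 = a1 x 1.-1 u0 /\
   a1 x 1.-1 u0 = sqrtC 2 * a1 (x - 1) 1 u0 /\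
   sqrtC 2 * a1 (x - 1) 1 u0 = a1 x 2 u0 /\
   a1 x 2 u0 = sqrtC 2 * a2 (x + 1) 1 u0 /\
   sqrtC 2 * a2 (x + 1) 1 u0 = sqrtC 2 * a2 (x - 1) 1 u0 - 2 * a2 x 2 u0) /\
  a2 x 1.-1 u0 = 0.
Proof.
move=> hx /=.
rewrite a10 a20 !a1_ab // !a2_ab // !(ab_S (t:=1)) //=.
have u1 : forall m, u0 m 1 = 1 by move=> m; have := u0o2 m 0.
rewrite !u1 -[sqrtC 2]/r.
have h1 : (x + 1 == 1) = false by apply/eqP; lia.
rewrite h1 exprN1.
have hinv : r^-1 = r / 2.
  apply: (mulfI rnz); rewrite mulfV ?rnz // mulrA -r2 divff //.
  by rewrite pnatr_eq0.
rewrite hinv.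
by case: (x - 1 == 1); repeat split; field.
Qed.

Theorem theorem4 (x : int) (t : nat) :
  (1 <= t)%N ->
  ((x %% 4 = 2)%Z /\ (t %% 4 = 1)%N \/ (x %% 4 = 0)%Z /\ (t %% 4 = 3)%N) ->
  (sqrtC 2 * a1 (x + 1) t u0 = a1 x t.-1 u0 /\
   a1 x t.-1 u0 = sqrtC 2 * a1 (x - 1) t u0 /\
   sqrtC 2 * a1 (x - 1) t u0 = a1 x t.+1 u0 /\
   a1 x t.+1 u0 = sqrtC 2 * a2 (x + 1) t u0 /\
   sqrtC 2 * a2 (x + 1) t u0 = sqrtC 2 * a2 (x - 1) t u0 - 2 * a2 x t.+1 u0) /\
  a2 x t.-1 u0 = 0.
Proof.
move=> ht hc.
case: (ltnP 1 t) => h1; last first.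
  have -> : t = 1%N by lia.
  apply: case1; case: hc => -[] //; lia.
have [n [j [-> hx]]] : exists n : nat, exists j : int, t = (2 * n + 3)%N /\ x = 4 * j + 2 * n%:Z.
  case: hc => -[hx ht'].
    exists ((t - 3) %/ 2)%N; exists ((x - 2 * ((t - 3) %/ 2)%N%:Z) %/ 4)%Z; split; lia.
  exists ((t - 3) %/ 2)%N; exists ((x - 2 * ((t - 3) %/ 2)%N%:Z) %/ 4)%Z; split; lia.
have [I1 I2] := inv n j; rewrite -hx in I1 I2.
rewrite (_ : (2 * n + 3)%N = (2 * n + 2).+1); last by lia.
apply: (@main x (2 * j + n%:Z) (n%:Z + 1) (2 * n + 2)%N) => //.
- by rewrite hx; ring.
- by lia.
- by lia.
Qed.
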